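(* In the noisy search problem with $1/\delta=2^L$ using the $hiePM$ strategy described in the context, for every level $l<L$ the nested log-likelihood $U^{\{l\}}(t)$ is a submartingale; more precisely, for all $t>0$, $$\mathbb{E}[U^{\{l\}}(t+1)\mid\pi(t)]-U^{\{l\}}(t)\ge K_h:=\min\Big\{I\big(\tfrac13,p[\tfrac12]\big),\ \tfrac23 D\big(\tfrac13 B_1+\tfrac23 B_0\,\|\,B_0\big)\Big\},$$ where $B_1=\mathrm{Bern}(1-p[1/2])$, $B_0=\mathrm{Bern}(p[1/2])$.
   Context: Search problem: fix $\delta\in(0,1)$ with $N=1/\delta=2^L$, $L$ an integer. A target index $\theta$ is uniform on $\{1,\dots,N\}$. A noise profile $p:(0,1)\to(0,1/2)$ is continuous and non-decreasing; $p[x]:=p(x)$. At each time $t$ a query set $S_t$ is chosen from the past and one observes $Y_t=\mathbb{1}(\theta\in S_t)\oplus Z_t$ with, conditionally on $S_t$, $Z_t\sim\mathrm{Bern}(p[\delta|S_t|])$ conditionally i.i.d. across time. Posterior $\pi_i(t)=\mathbb{P}(\theta=i\mid S_1^t,Y_1^t)$, $\pi_i(0)=\delta$; $\pi_S=\sum_{i\in S}\pi_i$. $hiePM$: $H_l^m=\{m2^{L-l}+1,\dots,(m+1)2^{L-l}\}$ for $l=0,\dots,L$, $m=0,\dots,2^l-1$. At time $t$, $l^*_t$ is the largest $l$ with $\max_m\pi_{H_l^m}(t)\ge\tfrac12$, $m^*_t=\arg\max_m\pi_{H^m_{l^*_t}}(t)$, $(l_{t+1},m_{t+1})$ minimizes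 $|\pi_{H^{m'}_{l'}}(t)-\tfrac12|$ over $\{(l^*_t,m^*_t),(l^*_t+1,2m^*_t),(l^*_t+1,2m^*_t+1)\}$, and $S_{t+1}=H^{m_{t+1}}_{l_{t+1}}$. Nested log-likelihood: for $q=1,\dots,2^l$, $\mathrm{bin}(q)=\{(q-1)2^{L-l}+1,\dots,q2^{L-l}\}$, $\pi^{\{l\}}_q(t)=\sum_{i\in\mathrm{bin}(q)}\pi_i(t)$, $U^{\{l\}}(t)=\sum_{q=1}^{2^l}\pi^{\{l\}}_q(t)\log\frac{\pi^{\{l\}}_q(t)}{1-\pi^{\{l\}}_q(t)}$. $D(\cdot\|\cdot)$ is KL divergence; convex combinations of Bernoulli distributions denote mixtures; $I(q,p)$ is the mutual information between input $\mathrm{Bern}(q)$ and the output of a binary symmetric channel with crossover probability $p$. *)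

(* Defs.v *)
From HB Require Import structures.
From mathcomp Require Import all_boot all_order all_algebra.
From mathcomp Require Import all_classical all_reals.
From mathcomp Require Import topology normedtype exp.
Set Implicit Arguments. Unset Strict Implicit. Unset Printing Implicit Defensive.
Import Order.TTheory GRing.Theory Num.Theory.
Local Open Scope ring_scope.

Section Search.
Variable R : realType.
Variable L : nat.
(* posterior vectors: indices 0..2^L-1 stand for 1..N (N = 2^L) *)
Notation N := (2 ^ L)%N.
Notation post := ('I_N -> R).

(* H_l^m = {m 2^(L-l) + 1, ..., (m+1) 2^(L-l)} (1-based) ; 0-based membership *)
Definition inH (l m : nat) (i : 'I_N) : bool :=
  (m * 2 ^ (L - l) <= i < m.+1 * 2 ^ (L - l))%N.

Definition piH (pi : post) (l m : nat) : R := \sum_(i < N | inH l m i) pi i.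

Definition is_lstar (pi : post) (ls : nat) : Prop :=
  [/\ (ls <= L)%N,
      (exists2 m, (m < 2 ^ ls)%N & 1 / 2 <= piH pi ls m) &
      (forall l, (ls < l <= L)%N -> forall m, (m < 2 ^ l)%N -> piH pi l m < 1 / 2)].

Definition is_mstar (pi : post) (ls ms : nat) : Prop :=
  (ms < 2 ^ ls)%N /\ forall m, (m < 2 ^ ls)%N -> piH pi ls m <= piH pi ls ms.

Definition candidate (ls ms l m : nat) : Prop :=
  (l = ls /\ m = ms) \/
  [/\ (ls.+1 <= L)%N, l = ls.+1 & (m = ms.*2 \/ m = ms.*2.+1)].

(* (l,m) is a possible hiePM choice of the next query set H_l^m at posterior pi
   (any tie-breaking rule is allowed) *)
Definition hiePM_choice (pi : post) (l m : nat) : Prop :=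
  exists ls ms, [/\ is_lstar pi ls, is_mstar pi ls ms, candidate ls ms l m &
    forall l' m', candidate ls ms l' m' ->
      `|piH pi l m - 1 / 2| <= `|piH pi l' m' - 1 / 2| ].

(* crossover probability p[delta |S|] of a query S = H_l^m, |S| = 2^(L-l) *)
Definition noise (p : R -> R) (l : nat) : R :=
  p ((2 ^ (L - l))%:R / (2 ^ L)%:R).

Definition lik (p : R -> R) (l m : nat) (y : bool) (i : 'I_N) : R :=
  if inH l m i == y then 1 - noise p l else noise p l.

Definition prob_obs (p : R -> R) (pi : post) (l m : nat) (y : bool) : R :=
  \sum_(i < N) pi i * lik p l m y i.

Definition bayes (p : R -> R) (pi : post) (l m : nat) (y : bool) : post :=
  fun i => pi i * lik p l m y i / prob_obs p pi l m y.

Inductive reach (p : R -> R) : nat -> post -> Prop :=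
| reach0 : reach p 0 (fun _ => 1 / N%:R)
| reachS t pi l m y : reach p t pi -> hiePM_choice pi l m ->
    reach p t.+1 (bayes p pi l m y).

(* nested log-likelihood U^{l}: bin(q) = H_l^{q-1}, q = 1..2^l *)
Definition Unest (l : nat) (pi : post) : R :=
  \sum_(m < 2 ^ l) piH pi l m * ln (piH pi l m / (1 - piH pi l m)).

Definition expected_next (p : R -> R) (l : nat) (pi : post) (lq mq : nat) : R :=
  \sum_(y : bool) prob_obs p pi lq mq y * Unest l (bayes p pi lq mq y).

End Search.

Definition binent {R : realType} (x : R) : R :=
  - (x * ln x) - (1 - x) * ln (1 - x).

Definition mutinfo_bsc {R : realType} (q p : R) : R :=
  binent (q * (1 - p) + (1 - q) * p) - binent p.

Definition kl_bern {R : realType} (a b : R) : R :=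
  a * ln (a / b) + (1 - a) * ln ((1 - a) / (1 - b)).

(* K_h = min{ I(1/3, p[1/2]), 2/3 D(1/3 B_1 + 2/3 B_0 || B_0) },
   B_1 = Bern(1 - p[1/2]), B_0 = Bern(p[1/2]); the mixture is
   Bern(1/3 (1 - p[1/2]) + 2/3 p[1/2]). *)
Definition K_h {R : realType} (p : R -> R) : R :=
  let p2 := p (1 / 2) in
  Num.min (mutinfo_bsc (1 / 3) p2)
          (2 / 3 * kl_bern (1 / 3 * (1 - p2) + 2 / 3 * p2) p2).

(* Main.v *)
Require Import Defs.
From HB Require Import structures.
From mathcomp Require Import all_boot all_order all_algebra.
From mathcomp Require Import all_classical all_reals.
From mathcomp Require Import topology normedtype exp.
From mathcomp Require Import ring lra zify.
Import Order.TTheory GRing.Theory Num.Theory.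
Import numFieldNormedType.Exports.
Local Open Scope classical_set_scope.
Local Open Scope ring_scope.
Section KL.
Set Printing Width 200.
Context {R : realType}.
Implicit Types a b u v x y : R.

Lemma ln_ge1V x : 0 < x -> 1 - x^-1 <= ln x.
Proof.
move=> x0.
have h := @le_ln1Dx R (x^-1 - 1).
have : 0 < x^-1 by rewrite invr_gt0.
move=> hi; have : -1 < x^-1 - 1 by lra.
move=> /h; rewrite addrC subrK lnV ?posrE //; lra.
Qed.

Lemma logsum u1 u2 v1 v2 : 0 < u1 -> 0 < u2 -> 0 < v1 -> 0 < v2 ->
  (u1 + u2) * ln ((u1 + u2) / (v1 + v2)) <= u1 * ln (u1 / v1) + u2 * ln (u2 / v2).
Proof.
move=> hu1 hu2 hv1 hv2.
set U := u1 + u2; set V := v1 + v2.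
have hU : 0 < U by rewrite addr_gt0.
have hV : 0 < V by rewrite addr_gt0.
have key : forall u v, 0 < u -> 0 < v ->
   u - v * U / V <= u * ln (u / v) - u * ln (U / V).
  move=> u v hu hv.
  have hz : 0 < (u / v) / (U / V) by rewrite !divr_gt0.
  have := ln_ge1V _ hz.
  rewrite ln_div ?posrE ?divr_gt0 // => h.
  rewrite -mulrBr.
  have -> : u - v * U / V = u * (1 - ((u / v) / (U / V))^-1).
    field. by rewrite !gt_eqF.
  by rewrite ler_pM2l.
have k1 := key _ _ hu1 hv1.
have k2 := key _ _ hu2 hv2.
have : u1 - v1 * U / V + (u2 - v2 * U / V) = 0.
  rewrite /U /V. field. by rewrite gt_eqF.
have : U * ln (U / V) = u1 * ln (U / V) + u2 * ln (U / V) by rewrite /U mulrDl.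
lra.
Qed.

Lemma kl_ge0 a b : 0 < a < 1 -> 0 < b < 1 -> 0 <= kl_bern a b.
Proof.
move=> /andP[a0 a1] /andP[b0 b1].
have := @logsum a (1 - a) b (1 - b) a0 _ b0 _.
rewrite !subr_gt0 => /(_ a1 b1).
have -> : a + (1 - a) = 1 by ring.
have -> : b + (1 - b) = 1 by ring.
by rewrite divr1 ln1 mulr0.
Qed.

Lemma kl_same a : 0 < a < 1 -> kl_bern a a = 0.
Proof.
move=> /andP[a0 a1]; rewrite /kl_bern !divff ?ln1 ?mulr0 ?addr0 //; lra.
Qed.

Lemma kl_sym a b : kl_bern (1 - a) (1 - b) = kl_bern a b.
Proof.
have e : forall c : R, 1 - (1 - c) = c by move=> c; ring.
by rewrite /kl_bern !e addrC.
Qed.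

Lemma kl_jc (lam a1 a2 b1 b2 : R) : 0 <= lam <= 1 ->
  0 < a1 < 1 -> 0 < a2 < 1 -> 0 < b1 < 1 -> 0 < b2 < 1 ->
  kl_bern (lam * a1 + (1 - lam) * a2) (lam * b1 + (1 - lam) * b2)
  <= lam * kl_bern a1 b1 + (1 - lam) * kl_bern a2 b2.
Proof.
move=> /andP[l0 l1] /andP[a10 a11] /andP[a20 a21] /andP[b10 b11] /andP[b20 b21].
have [->|ln0] := eqVneq lam 0.
  by rewrite !mul0r !subr0 !mul1r !add0r.
have [->|ln1] := eqVneq lam 1.
  by rewrite !mul1r !subrr !mul0r !addr0.
have lp : 0 < lam by rewrite lt_neqAle eq_sym ln0.
have lq : 0 < 1 - lam by rewrite subr_gt0 lt_neqAle ln1.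
have l1' : lam < 1 by lra.
have e : forall c d, 0 < c -> 0 < d -> (lam * c) / (lam * d) = c / d.
  move=> c d c0 d0; field; rewrite ?gt_eqF //.
have e' : forall c d, 0 < c -> 0 < d -> ((1 - lam) * c) / ((1 - lam) * d) = c / d.
  move=> c d c0 d0; field; rewrite ?gt_eqF //.
have h1 := @logsum (lam * a1) ((1 - lam) * a2) (lam * b1) ((1 - lam) * b2).
have h2 := @logsum (lam * (1 - a1)) ((1 - lam) * (1 - a2)) (lam * (1 - b1)) ((1 - lam) * (1 - b2)).
rewrite !e ?e' ?subr_gt0 // in h1 h2; rewrite ?mulr_gt0 ?subr_gt0 // in h1 h2.
have E1 : 1 - (lam * a1 + (1 - lam) * a2) = lam * (1 - a1) + (1 - lam) * (1 - a2) by ring.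
have E2 : 1 - (lam * b1 + (1 - lam) * b2) = lam * (1 - b1) + (1 - lam) * (1 - b2) by ring.
rewrite /kl_bern E1 E2.
move: (h1 isT isT isT isT) (h2 isT isT isT isT).
lra.
Qed.

End KL.
Arguments kl_jc {R lam a1 a2 b1 b2}.
Arguments kl_ge0 {R a b}.
Arguments kl_same {R a}.
Section KL2.
Context {R : realType}.
Implicit Types (a b x y z q f lam : R).
Definition phi (q f : R) := f * (1 - q) + (1 - f) * q.

Lemma phi_in q f : 0 < q < 1/2 -> 0 <= f <= 1 -> 0 < phi q f < 1.
Proof.
move=> /andP[q0 q1] /andP[f0 f1]; rewrite /phi.
have h1 : 0 <= f * (1 - 2 * q) by rewrite mulr_ge0 //; lra.
have h2 : f * (1 - 2 * q) <= 1 - 2 * q by rewrite ler_piMl //; lra.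
have -> : f * (1 - q) + (1 - f) * q = q + f * (1 - 2 * q) by ring.
apply/andP; split; lra.
Qed.

Lemma conv_pos lam a b : 0 <= lam <= 1 -> 0 < a -> 0 < b -> 0 < lam * a + (1 - lam) * b.
Proof.
move=> /andP[l0 l1] a0 b0.
have [->|ln0] := eqVneq lam 0; first by rewrite mul0r add0r subr0 mul1r.
have lp : 0 < lam by rewrite lt_neqAle eq_sym ln0.
apply: ltr_pwDl; first by rewrite mulr_gt0.
by rewrite mulr_ge0 // ?subr_ge0 // ltW.
Qed.

Lemma conv_in lam a b : 0 <= lam <= 1 -> 0 < a < 1 -> 0 < b < 1 -> 0 < lam * a + (1 - lam) * b < 1.
Proof.
move=> hl /andP[a0 a1] /andP[b0 b1]; apply/andP; split; first exact: conv_pos.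
rewrite -subr_gt0.
have -> : 1 - (lam * a + (1 - lam) * b) = lam * (1 - a) + (1 - lam) * (1 - b) by ring.
by apply: conv_pos; rewrite // subr_gt0.
Qed.

Lemma kl_mono2_aux a b b' lam : 0 <= lam <= 1 -> 0 < a < 1 -> 0 < b' < 1 ->
  b = lam * b' + (1 - lam) * a -> kl_bern a b <= kl_bern a b'.
Proof.
move=> hl ha hb' hb.
have := kl_jc hl ha ha hb' ha.
have -> : lam * a + (1 - lam) * a = a by ring.
rewrite -hb kl_same // mulr0 addr0 => h.
apply: (le_trans h).
have := kl_ge0 ha hb'; move: hl => /andP[? ?]; nra.
Qed.

Lemma kl_mono1_aux a a' b lam : 0 <= lam <= 1 -> 0 < a' < 1 -> 0 < b < 1 ->
  a = lam * a' + (1 - lam) * b -> kl_bern a b <= kl_bern a' b.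
Proof.
move=> hl ha' hb ha.
have := kl_jc hl ha' hb hb hb.
have -> : lam * b + (1 - lam) * b = b by ring.
rewrite -ha kl_same // mulr0 addr0 => h.
apply: (le_trans h).
have := kl_ge0 ha' hb; move: hl => /andP[? ?]; nra.
Qed.

Lemma conv_lam (x y z : R) : x <= y <= z \/ z <= y <= x ->
  exists2 lam, 0 <= lam <= 1 & y = lam * z + (1 - lam) * x.
Proof.
have [->|nzx] := eqVneq z x.
  move=> h; exists 0; first by rewrite lexx ler01.
  move: h => [] /andP[h1 h2]; rewrite mul0r add0r subr0 mul1r; apply/eqP; rewrite eq_le; apply/andP; split => //.
move=> h; exists ((y - x) / (z - x)).
  case: h => /andP[h1 h2].
    have zx : 0 < z - x by rewrite subr_gt0 lt_neqAle eq_sym nzx (le_trans h1 h2).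
    apply/andP; split; first by apply: divr_ge0; lra.
    rewrite ler_pdivrMr // mul1r; lra.
  have zx : 0 < x - z by rewrite subr_gt0 lt_neqAle nzx (le_trans h1 h2).
  have -> : (y - x) / (z - x) = (x - y) / (x - z).
    have nxz : x != z by rewrite eq_sym.
    by field; rewrite ?subr_eq0 ?nzx ?nxz ?andbT.
  apply/andP; split; first by apply: divr_ge0; lra.
  rewrite ler_pdivrMr // mul1r; lra.
field; by rewrite subr_eq0.
Qed.

Lemma kl_mono2 a b b' : 0 < a < 1 -> 0 < b' < 1 ->
  a <= b <= b' \/ b' <= b <= a -> kl_bern a b <= kl_bern a b'.
Proof.
move=> ha hb' h; have [lam hl e] := conv_lam _ _ _ h.
exact: kl_mono2_aux _ _ _ _ hl ha hb' e.
Qed.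

Lemma kl_mono1 a a' b : 0 < a' < 1 -> 0 < b < 1 ->
  b <= a <= a' \/ a' <= a <= b -> kl_bern a b <= kl_bern a' b.
Proof.
move=> ha' hb h; have [lam hl e] := conv_lam _ _ _ h.
exact: kl_mono1_aux _ _ _ _ hl ha' hb e.
Qed.

Lemma kl_dp q' q a b : 0 < q' -> q' <= q -> q < 1/2 -> 0 <= a <= 1 -> 0 <= b <= 1 ->
  kl_bern (phi q a) (phi q b) <= kl_bern (phi q' a) (phi q' b).
Proof.
move=> q0 qq q1 ha hb.
have hq' : 0 < q' < 1/2 by apply/andP; split => //; lra.
have hpa := phi_in _ _ hq' ha; have hpb := phi_in _ _ hq' hb.
have hpa' : 0 < 1 - phi q' a < 1 by move: hpa => /andP[? ?]; apply/andP; split; lra.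
have hpb' : 0 < 1 - phi q' b < 1 by move: hpb => /andP[? ?]; apply/andP; split; lra.
set lam := 1 - (q - q') / (1 - 2 * q').
have d0 : 0 < 1 - 2 * q' by lra.
have hl : 0 <= lam <= 1.
  rewrite /lam; apply/andP; split.
    rewrite subr_ge0 ler_pdivrMr // mul1r; lra.
  rewrite lerBlDr lerDl divr_ge0 //; lra.
have e : forall f, phi q f = lam * phi q' f + (1 - lam) * (1 - phi q' f).
  move=> f; rewrite /lam /phi; field; rewrite gt_eqF //.
have := kl_jc hl hpa hpa' hpb hpb'.
rewrite -!e kl_sym.
have -> : lam * kl_bern (phi q' a) (phi q' b) + (1 - lam) * kl_bern (phi q' a) (phi q' b) = kl_bern (phi q' a) (phi q' b) by ring.
done.
Qed.

Lemma binent_sym x : binent (1 - x) = binent x.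
Proof.
have e : forall c : R, 1 - (1 - c) = c by move=> c; ring.
rewrite /binent e; ring.
Qed.

Lemma conc_id a b lam : 0 < a < 1 -> 0 < b < 1 -> 0 <= lam <= 1 ->
  lam * kl_bern a (lam * a + (1 - lam) * b) + (1 - lam) * kl_bern b (lam * a + (1 - lam) * b)
  = binent (lam * a + (1 - lam) * b) - lam * binent a - (1 - lam) * binent b.
Proof.
move=> /andP[a0 a1] /andP[b0 b1] /andP[l0 l1].
set m := lam * a + (1 - lam) * b.
have : 0 < m < 1 by apply: conv_in; apply/andP; split.
move=> /andP[m0 m1']; have m1 : 0 < 1 - m by lra.
have a1' : 0 < 1 - a by lra.
have b1' : 0 < 1 - b by lra.
rewrite /kl_bern /binent !ln_div ?posrE //.
move: (ln m) (ln (1 - m)) => X Y.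
rewrite /m; ring.
Qed.

Lemma binent_conc a b lam : 0 < a < 1 -> 0 < b < 1 -> 0 <= lam <= 1 ->
  lam * binent a + (1 - lam) * binent b <= binent (lam * a + (1 - lam) * b).
Proof.
move=> ha hb hl.
have hm : 0 < lam * a + (1 - lam) * b < 1 by apply: conv_in.
have := conc_id _ _ _ ha hb hl.
have := kl_ge0 ha hm; have := kl_ge0 hb hm; move: hl => /andP[? ?].
nra.
Qed.

End KL2.
Arguments kl_dp {R q' q a b}.
Arguments phi_in {R q f}.
Arguments kl_mono2 {R a b b'}.
Arguments kl_mono1 {R a a' b}.
Arguments binent_conc {R a b lam}.
Arguments conc_id {R a b lam}.
Section Comb.
Context {R : realType} (L : nat).
Local Notation N := (2 ^ L)%N.

Lemma inH_div l m (i : 'I_N) : inH l m i = (i %/ 2 ^ (L - l) == m)%N.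
Proof.
have d0 : (0 < 2 ^ (L - l))%N by rewrite expn_gt0.
by rewrite /inH eqn_leq leq_divRL // -[(i %/ 2 ^ (L - l) <= m)%N]ltnS ltn_divLR // andbC.
Qed.

Lemma div_lt l (i : 'I_N) : (l <= L)%N -> (i %/ 2 ^ (L - l) < 2 ^ l)%N.
Proof.
move=> hl; rewrite ltn_divLR ?expn_gt0 // -expnD subnKC //.
Qed.

Lemma partition_sum l (Q : pred 'I_N) (F : 'I_N -> R) : (l <= L)%N ->
  \sum_(m < 2 ^ l) \sum_(i | inH l m i && Q i) F i = \sum_(i | Q i) F i.
Proof.
move=> hl.
rewrite (eq_bigr (fun m : 'I_(2 ^ l) => \sum_i (if inH l m i && Q i then F i else 0))); last first.
  by move=> m _; rewrite big_mkcond.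
rewrite exchange_big /= [RHS]big_mkcond /=.
apply: eq_bigr => i _.
rewrite (bigD1 (Ordinal (div_lt l i hl))) //= big1 ?addr0.
  by rewrite inH_div eqxx.
move=> m hm; rewrite inH_div.
case: eqP => // h; exfalso; move: hm => /eqP; apply; apply: val_inj => /=; by rewrite h.
Qed.

Lemma children (pi : 'I_N -> R) l m : (l < L)%N ->
  piH pi l m = piH pi l.+1 m.*2 + piH pi l.+1 m.*2.+1.
Proof.
move=> hl; rewrite /piH (bigID (fun i : 'I_N => inH l.+1 m.*2 i)) /=.
have e : forall i : 'I_N, (i %/ 2 ^ (L - l) = (i %/ 2 ^ (L - l.+1)) %/ 2)%N.
  move=> i; rewrite -divnMA -expnSr; congr (_ %/ 2 ^ _)%N; lia.
congr (_ + _); apply: eq_bigl => i; rewrite !inH_div e.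
  apply/idP/idP; first by move=> /andP[_ ->].
  move=> /eqP ->; rewrite eqxx andbT; apply/eqP; lia.
apply/idP/idP.
  move=> /andP[/eqP h1 h2]; apply/eqP; move: h2 => /eqP h2; lia.
move=> /eqP h; apply/andP; split; apply/eqP; lia.
Qed.

Lemma piH0 (pi : 'I_N -> R) : piH pi 0 0 = \sum_i pi i.
Proof.
rewrite /piH; apply: eq_bigl => i; rewrite inH_div subn0 divn_small //.
Qed.

Lemma sum_pos (P : pred 'I_N) (F : 'I_N -> R) : (exists i, P i) -> (forall i, 0 < F i) ->
  0 < \sum_(i | P i) F i.
Proof.
move=> [i0 hi0] hF; rewrite (bigD1 i0) //=.
have h1 := hF i0.
have h2 : 0 <= \sum_(i | P i && (i != i0)) F i by apply: sumr_ge0 => i _; apply: ltW.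
lra.
Qed.

Lemma sum_ge0 (P : pred 'I_N) (F : 'I_N -> R) : (forall i, 0 < F i) ->
  0 <= \sum_(i | P i) F i.
Proof. by move=> hF; apply: sumr_ge0 => i _; apply: ltW. Qed.

End Comb.
Section Valid.
Context {R : realType} (L : nat).
Local Notation N := (2 ^ L)%N.

Definition valid (pi : 'I_N -> R) := (forall i, 0 < pi i) /\ \sum_i pi i = 1.

Lemma noise_bounds (p : R -> R) lq :
  (forall x : R, 0 < x < 1 -> 0 < p x < 1 / 2) ->
  (forall x y : R, 0 < x -> x <= y -> y < 1 -> p x <= p y) ->
  (1 <= lq <= L)%N -> 0 < noise L p lq < 1 / 2 /\ noise L p lq <= p (1 / 2).
Proof.
move=> hr hm /andP[h1 h2].
set x : R := ((2 ^ (L - lq))%:R / (2 ^ L)%:R).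
have hx0 : 0 < x by rewrite /x divr_gt0 // ltr0n expn_gt0.
have hx1 : x <= 1 / 2.
  rewrite /x ler_pdivrMr ?ltr0n ?expn_gt0 //.
  have hn : (2 ^ (L - lq) * 2 <= 2 ^ L)%N.
    rewrite -expnSr; apply: leq_pexp2l => //; lia.
  have := hn; rewrite -(ler_nat R) natrM => hn'.
  lra.
have hx : 0 < x < 1 by apply/andP; split => //; lra.
split; first exact: hr.
by apply: hm => //; lra.
Qed.

Lemma struct (pi : 'I_N -> R) lq mq : (1 <= L)%N -> valid pi -> hiePM_choice pi lq mq ->
  [/\ (1 <= lq <= L)%N, (mq < 2 ^ lq)%N, 1 / 3 <= piH pi lq mq &
      ((lq < L)%N -> piH pi lq mq <= 2 / 3)].
Proof.
move=> L1 [pos tot] [ls [ms [[lsL [m0 hm0 hm0'] hlt] [hms hmax] hc hmin]]].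
have hX : 1 / 2 <= piH pi ls ms by apply: le_trans hm0' (hmax _ hm0).
have nX : `|piH pi ls ms - 1 / 2| = piH pi ls ms - 1 / 2 by rewrite ger0_norm // subr_ge0.
have [lsL'|lsL'] := ltnP ls L.
  have hch := children L pi ls ms lsL'.
  set c1 := piH pi ls.+1 ms.*2 in hch *.
  set c2 := piH pi ls.+1 ms.*2.+1 in hch *.
  have hm1 : (ms.*2 < 2 ^ ls.+1)%N by rewrite expnS; lia.
  have hm2 : (ms.*2.+1 < 2 ^ ls.+1)%N by rewrite expnS; lia.
  have c1l : c1 < 1 / 2 by apply: hlt => //; apply/andP; split.
  have c2l : c2 < 1 / 2 by apply: hlt => //; apply/andP; split.
  have n1 : `|c1 - 1 / 2| = 1 / 2 - c1 by rewrite ltr0_norm ?opprB // subr_lt0.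
  have n2 : `|c2 - 1 / 2| = 1 / 2 - c2 by rewrite ltr0_norm ?opprB // subr_lt0.
  have cand0 : candidate L ls ms ls ms by left.
  have cand1 : candidate L ls ms ls.+1 ms.*2 by right; split => //; left.
  have cand2 : candidate L ls ms ls.+1 ms.*2.+1 by right; split => //; right.
  case: hc => [[? ?]|[_ ? [?|?]]]; subst lq mq.
  - have := hmin _ _ cand1; have := hmin _ _ cand2; rewrite nX n1 n2 => h1 h2.
    have X23 : piH pi ls ms <= 2 / 3 by lra.
    have ls1 : (1 <= ls)%N.
      rewrite lt0n; apply/negP => /eqP ls0.
      move: X23 hms; rewrite ls0 => X hm; move: hm; rewrite expn0 ltnS leqn0 => /eqP ms0.
      by move: X; rewrite ms0 piH0 tot; lra.
    split => //; first by rewrite ls1 ltnW.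
    by lra.
  - rewrite -/c1 in hmin *.
    have := hmin _ _ cand0; have := hmin _ _ cand2; rewrite nX n1 n2 => h1 h2.
    split => //; lra.
  - rewrite -/c2 in hmin *.
    have := hmin _ _ cand0; have := hmin _ _ cand1; rewrite nX n1 n2 => h1 h2.
    split => //; lra.
have lsE : ls = L by apply/eqP; rewrite eqn_leq lsL.
case: hc => [[? ?]|[hh _ _]]; last by move: hh; rewrite lsE ltnn.
subst lq mq.
split => //; first by rewrite lsE leqnn L1.
  lra.
by rewrite lsE ltnn.
Qed.

Lemma reach_valid (p : R -> R) t (pi : 'I_N -> R) :
  (forall x : R, 0 < x < 1 -> 0 < p x < 1 / 2) ->
  (forall x y : R, 0 < x -> x <= y -> y < 1 -> p x <= p y) ->
  (1 <= L)%N -> reach p t pi -> valid pi.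
Proof.
move=> hr hm L1; elim => {t pi}.
  have N0 : (0 < (2 ^ L)%:R :> R) by rewrite ltr0n expn_gt0.
  split; first by move=> i; rewrite divr_gt0.
  rewrite sumr_const card_ord -mulr_natr; field; by rewrite gt_eqF.
move=> t pi l m y _ [pos tot] hc.
have [hl _ _ _] := @struct pi l m L1 (conj pos tot) hc.
have [/andP[q0 q1] _] := @noise_bounds p l hr hm hl.
have lik_pos : forall i : 'I_N, 0 < lik p l m y i.
  by move=> i; rewrite /lik; case: (inH l m i == y); lra.
have P0 : 0 < prob_obs p pi l m y.
  rewrite /prob_obs; apply: sum_pos.
    by exists (Ordinal (expn_gt0 2 L)).
  by move=> i; rewrite mulr_gt0.
split.
  by move=> i; rewrite /bayes divr_gt0 // mulr_gt0.
by rewrite /bayes -mulr_suml -/(prob_obs p pi l m y) divff // gt_eqF.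
Qed.

End Valid.
Section Bin.
Context {R : realType}.
Implicit Types (a b x w q f g U V : R).

Lemma term_y U V : 0 < U -> 0 < V ->
  (U + V) * (U / (U + V) * ln (U / (U + V) / (1 - U / (U + V)))) = U * ln (U / V).
Proof.
move=> u0 v0.
have s0 : U + V != 0 by rewrite gt_eqF // addr_gt0.
have vn : V != 0 by rewrite gt_eqF.
have e : 1 - U / (U + V) = V / (U + V) by field.
have -> : U / (U + V) / (1 - U / (U + V)) = U / V.
  by rewrite e; field; rewrite vn s0.
rewrite mulrA; congr (_ * _); field; done.
Qed.

Lemma bin_id x w a b : 0 < x -> 0 < w -> 0 < a < 1 -> 0 < b < 1 ->
  (x * a) * ln ((x * a) / (w * b)) + (x * (1 - a)) * ln ((x * (1 - a)) / (w * (1 - b)))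
  - x * ln (x / w) = x * kl_bern a b.
Proof.
move=> x0 w0 /andP[a0 a1] /andP[b0 b1].
have a1' : 0 < 1 - a by lra.
have b1' : 0 < 1 - b by lra.
rewrite /kl_bern !ln_div ?posrE ?mulr_gt0 // !lnM ?posrE //.
ring.
Qed.

Lemma frac01 a x : 0 <= a -> a <= x -> 0 < x -> 0 <= a / x <= 1.
Proof.
move=> a0 ax x0; apply/andP; split; first by rewrite divr_ge0 // ltW.
by rewrite ler_pdivrMr // mul1r.
Qed.

Lemma phi_mono q f g : q < 1 / 2 -> f <= g -> phi q f <= phi q g.
Proof.
move=> q1 fg; rewrite /phi.
rewrite -subr_ge0.
have -> : g * (1 - q) + (1 - g) * q - (f * (1 - q) + (1 - f) * q) = (g - f) * (1 - 2 * q) by ring.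
by rewrite mulr_ge0 // subr_ge0 //; lra.
Qed.

Definition Uq (q al be : R) (y : bool) := if y then al * (1 - q) + be * q else al * q + be * (1 - q).

Lemma bin_term al be ga de q : 0 <= al -> 0 <= be -> 0 <= ga -> 0 <= de ->
  0 < al + be -> 0 < ga + de -> al + be + ga + de = 1 -> 0 < q < 1 / 2 ->
  Uq q al be true * ln (Uq q al be true / Uq q ga de true) +
  Uq q al be false * ln (Uq q al be false / Uq q ga de false)
  - (al + be) * ln ((al + be) / (1 - (al + be)))
  = (al + be) * kl_bern (phi q (al / (al + be))) (phi q (ga / (ga + de))).
Proof.
move=> a0 b0 g0 d0 x0 w0 tot hq.
have hw : 1 - (al + be) = ga + de by lra.
have f1 : 0 <= al / (al + be) <= 1 by apply: frac01 => //; lra.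
have f2 : 0 <= ga / (ga + de) <= 1 by apply: frac01 => //; lra.
have p1 := phi_in hq f1; have p2 := phi_in hq f2.
rewrite -(bin_id _ _ _ _ x0 w0 p1 p2) hw.
have xn : al + be != 0 by rewrite gt_eqF.
have wn : ga + de != 0 by rewrite gt_eqF.
have -> : Uq q al be true = (al + be) * phi q (al / (al + be)) by rewrite /Uq /phi; field.
have -> : Uq q al be false = (al + be) * (1 - phi q (al / (al + be))) by rewrite /Uq /phi; field.
have -> : Uq q ga de true = (ga + de) * phi q (ga / (ga + de)) by rewrite /Uq /phi; field.
have -> : Uq q ga de false = (ga + de) * (1 - phi q (ga / (ga + de))) by rewrite /Uq /phi; field.
done.
Qed.

Lemma binA al be ga de q' q : 0 <= al -> 0 <= be -> 0 <= ga -> 0 <= de ->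
  0 < al + be -> 0 < ga + de -> al + be + ga + de = 1 ->
  0 < q' -> q' <= q -> q < 1 / 2 -> (al = 0 \/ be = 0) ->
  al * kl_bern (phi q 1) (phi q (al + ga)) + be * kl_bern (phi q 0) (phi q (al + ga))
  <= (al + be) * kl_bern (phi q' (al / (al + be))) (phi q' (ga / (ga + de))).
Proof.
move=> a0 b0 g0 d0 x0 w0 tot q0 qq q1 hab.
have hq : 0 < q < 1 / 2 by apply/andP; split => //; lra.
have f2 : 0 <= ga / (ga + de) <= 1 by apply: frac01 => //; lra.
have s01 : 0 <= al + ga <= 1 by apply/andP; split; lra.
have i01 : (0 <= (1 : R)) && ((1 : R) <= 1) by apply/andP; split; lra.
have i00 : (0 <= (0 : R)) && ((0 : R) <= 1) by apply/andP; split; lra.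
case: hab => [a00|b00].
  subst al; rewrite mul0r add0r !add0r.
  have -> : 0 / be = 0 by rewrite mul0r.
  apply: ler_wpM2l => //.
  apply: le_trans (kl_dp q0 qq q1 i00 f2).
  apply: kl_mono2; first exact: phi_in.
    exact: phi_in.
  left; apply/andP; split; apply: phi_mono => //; try lra.
  rewrite ler_pdivlMr //; have : ga * (ga + de) <= ga by nra.
  lra.
subst be; rewrite mul0r addr0 !addr0.
have a0' : 0 < al by lra.
have -> : al / al = 1 by rewrite divff // gt_eqF.
apply: ler_wpM2l => //.
apply: le_trans (kl_dp q0 qq q1 i01 f2).
apply: kl_mono2; first exact: phi_in.
  exact: phi_in.
right; apply/andP; split; apply: phi_mono => //; try lra.
rewrite ler_pdivrMr //.
have -> : ga + de = 1 - al by lra.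
nra.
Qed.

Lemma binB1 al be ga de q : 0 <= al -> 0 <= be -> 0 <= ga -> 0 <= de ->
  0 < al + be -> 0 < ga + de -> 0 < q < 1 / 2 ->
  0 <= (al + be) * kl_bern (phi q (al / (al + be))) (phi q (ga / (ga + de))).
Proof.
move=> a0 b0 g0 d0 x0 w0 hq.
have f1 : 0 <= al / (al + be) <= 1 by apply: frac01 => //; lra.
have f2 : 0 <= ga / (ga + de) <= 1 by apply: frac01 => //; lra.
apply: mulr_ge0; first lra.
exact: (kl_ge0 (phi_in hq f1) (phi_in hq f2)).
Qed.

Lemma binB0 al be de q' q : 0 < al -> 0 <= be -> 0 < de ->
  al + be + de = 1 -> 0 < q' -> q' <= q -> q < 1 / 2 ->
  kl_bern (phi q al) (phi q 0)
  <= (al + be) * kl_bern (phi q' (al / (al + be))) (phi q' (0 / (0 + de))).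
Proof.
move=> a0 b0 d0 tot q0 qq q1.
have hq : 0 < q < 1 / 2 by apply/andP; split => //; lra.
have x0 : 0 < al + be by lra.
have f1 : 0 <= al / (al + be) <= 1 by apply: frac01 => //; lra.
have i00 : (0 <= (0 : R)) && ((0 : R) <= 1) by apply/andP; split; lra.
rewrite mul0r.
have hl : 0 <= al + be <= 1 by apply/andP; split; lra.
have ha1 := phi_in hq f1; have ha0 := phi_in hq i00.
apply: (@le_trans _ _ ((al + be) * kl_bern (phi q (al / (al + be))) (phi q 0))); last first.
  by apply: ler_wpM2l; [lra | exact: kl_dp].
have := kl_jc hl ha1 ha0 ha0 ha0.
rewrite kl_same // mulr0 addr0.
have -> : (al + be) * phi q 0 + (1 - (al + be)) * phi q 0 = phi q 0 by ring.
have -> : (al + be) * phi q (al / (al + be)) + (1 - (al + be)) * phi q 0 = phi q al.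
  by rewrite /phi; field; rewrite gt_eqF.
done.
Qed.

End Bin.
Section Drift.
Context {R : realType} (L : nat).
Local Notation N := (2 ^ L)%N.

Definition Tm (q a b c d : R) := (a + b) * kl_bern (phi q (a / (a + b))) (phi q (c / (c + d))).

Lemma lik_sum (p : R -> R) (pi : 'I_N -> R) lq mq y (Pr : pred 'I_N) :
  \sum_(i | Pr i) pi i * lik p lq mq y i =
  Uq (noise L p lq) (\sum_(i | Pr i && inH lq mq i) pi i) (\sum_(i | Pr i && ~~ inH lq mq i) pi i) y.
Proof.
rewrite (bigID (fun i => inH lq mq i)) /=.
case: y; rewrite /Uq !mulr_suml; congr (_ + _); apply: eq_bigr => i /andP[_ h];
  rewrite /lik ?h ?(negbTE h) //.
Qed.

Lemma in_bin l m : (l <= L)%N -> (m < 2 ^ l)%N -> (m * 2 ^ (L - l) < N)%N.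
Proof.
move=> hl hm; have -> : N = (2 ^ l * 2 ^ (L - l))%N by rewrite -expnD subnKC.
by rewrite ltn_pmul2r ?expn_gt0.
Qed.

Lemma bin_facts (pi : 'I_N -> R) l lq mq (m : 'I_(2 ^ l)) : valid L pi -> (1 <= l <= L)%N ->
  [/\ 0 < \sum_(i | inH l m i && inH lq mq i) pi i + \sum_(i | inH l m i && ~~ inH lq mq i) pi i,
      0 < \sum_(i | ~~ inH l m i && inH lq mq i) pi i + \sum_(i | ~~ inH l m i && ~~ inH lq mq i) pi i &
      \sum_(i | inH l m i && inH lq mq i) pi i + \sum_(i | inH l m i && ~~ inH lq mq i) pi i +
      \sum_(i | ~~ inH l m i && inH lq mq i) pi i + \sum_(i | ~~ inH l m i && ~~ inH lq mq i) pi i = 1].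
Proof.
move=> [pos tot] /andP[l1 lL].
set al := \sum_(i | inH l m i && inH lq mq i) pi i.
set be := \sum_(i | inH l m i && ~~ inH lq mq i) pi i.
set ga := \sum_(i | ~~ inH l m i && inH lq mq i) pi i.
set de := \sum_(i | ~~ inH l m i && ~~ inH lq mq i) pi i.
have hx : piH pi l m = al + be by rewrite /piH (bigID (fun i => inH lq mq i)).
have hw : \sum_(i | ~~ inH l m i) pi i = ga + de by rewrite (bigID (fun i => inH lq mq i)).
split.
- rewrite -hx /piH; apply: sum_pos => //.
  exists (Ordinal (in_bin l m lL (ltn_ord m))).
  by rewrite inH_div /= mulnK ?expn_gt0.
- rewrite -hw; apply: sum_pos => //.
  have [m0|mn0] := eqVneq (val m) 0%N.
    have hlt : (2 ^ (L - l) < N)%N by rewrite ltn_exp2l //; lia.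
    exists (Ordinal hlt); rewrite inH_div /= divnn expn_gt0 /= m0 //.
  exists (Ordinal (expn_gt0 2 L)); rewrite inH_div /= div0n eq_sym; exact: mn0.
rewrite -tot (bigID (fun i => inH l m i)) /= hw.
have -> : al + be + ga + de = (al + be) + (ga + de) by ring.
by rewrite -hx.
Qed.

Lemma drift (p : R -> R) (pi : 'I_N -> R) l lq mq : valid L pi -> (1 <= l <= L)%N ->
  0 < noise L p lq < 1 / 2 ->
  expected_next p l pi lq mq - Unest l pi =
  \sum_(m < 2 ^ l) Tm (noise L p lq)
     (\sum_(i | inH l m i && inH lq mq i) pi i) (\sum_(i | inH l m i && ~~ inH lq mq i) pi i)
     (\sum_(i | ~~ inH l m i && inH lq mq i) pi i) (\sum_(i | ~~ inH l m i && ~~ inH lq mq i) pi i).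
Proof.
move=> [pos tot] /andP[l1 lL] hq.
rewrite /expected_next /Unest big_bool /= !mulr_sumr -big_split -sumrB /=.
apply: eq_bigr => m _.
set al := \sum_(i | inH l m i && inH lq mq i) pi i.
set be := \sum_(i | inH l m i && ~~ inH lq mq i) pi i.
set ga := \sum_(i | ~~ inH l m i && inH lq mq i) pi i.
set de := \sum_(i | ~~ inH l m i && ~~ inH lq mq i) pi i.
have a0 : 0 <= al by apply: sum_ge0.
have b0 : 0 <= be by apply: sum_ge0.
have g0 : 0 <= ga by apply: sum_ge0.
have d0 : 0 <= de by apply: sum_ge0.
have hx : piH pi l m = al + be by rewrite /piH (bigID (fun i => inH lq mq i)).
have hw : \sum_(i | ~~ inH l m i) pi i = ga + de by rewrite (bigID (fun i => inH lq mq i)).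
have ht : al + be + ga + de = 1.
  rewrite -tot (bigID (fun i => inH l m i)) /= hw.
  have -> : al + be + ga + de = (al + be) + (ga + de) by ring.
  by rewrite -hx.
have x0 : 0 < al + be.
  rewrite -hx /piH; apply: sum_pos => //.
  exists (Ordinal (in_bin l m lL (ltn_ord m))).
  by rewrite inH_div /= mulnK ?expn_gt0.
have w0 : 0 < ga + de.
  rewrite -hw; apply: sum_pos => //.
  have [m0|mn0] := eqVneq (val m) 0%N.
    have hlt : (2 ^ (L - l) < N)%N by rewrite ltn_exp2l //; lia.
    exists (Ordinal hlt); rewrite inH_div /= divnn expn_gt0 /= m0 //.
  exists (Ordinal (expn_gt0 2 L)); rewrite inH_div /= div0n eq_sym; exact: mn0.
have U : forall y, \sum_(i | inH l m i) pi i * lik p lq mq y i = Uq (noise L p lq) al be y.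
  by move=> y; rewrite lik_sum.
have V : forall y, \sum_(i | ~~ inH l m i) pi i * lik p lq mq y i = Uq (noise L p lq) ga de y.
  by move=> y; rewrite lik_sum.
have P : forall y, prob_obs p pi lq mq y = Uq (noise L p lq) al be y + Uq (noise L p lq) ga de y.
  by move=> y; rewrite -U -V /prob_obs (bigID (fun i => inH l m i)).
have B : forall y, piH (bayes p pi lq mq y) l m = Uq (noise L p lq) al be y / prob_obs p pi lq mq y.
  by move=> y; rewrite /piH /bayes -mulr_suml U.
move: hq => /andP[q0 q1].
have Upos : forall a b, 0 <= a -> 0 <= b -> 0 < a + b -> forall y, 0 < Uq (noise L p lq) a b y.
  move=> a b ha hb hab y; rewrite /Uq; case: y.
    have : 0 <= a * (1 - 2 * noise L p lq) by rewrite mulr_ge0 //; lra.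
    have : 0 < (a + b) * noise L p lq by rewrite mulr_gt0.
    nra.
  have : 0 <= b * (1 - 2 * noise L p lq) by rewrite mulr_ge0 //; lra.
  have : 0 < (a + b) * noise L p lq by rewrite mulr_gt0.
  nra.
rewrite !B !P !term_y ?Upos // hx.
rewrite bin_term //.
by apply/andP; split.
Qed.

End Drift.
Lemma divpow (L a b : nat) (i : nat) : (a <= b <= L)%N ->
  (i %/ 2 ^ (L - a) = i %/ 2 ^ (L - b) %/ 2 ^ (b - a))%N.
Proof.
move=> /andP[ab bL]; rewrite -divnMA -expnD; congr (_ %/ 2 ^ _)%N; lia.
Qed.

Theorem lemma8 (R : realType) (L : nat) (p : R -> R)
  (hp_range : forall x : R, 0 < x < 1 -> 0 < p x < 1 / 2)
  (hp_mono : forall x y : R, 0 < x -> x <= y -> y < 1 -> p x <= p y)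
  (hp_cont : forall x : R, 0 < x < 1 -> (p @ x --> p x))
  (l : nat) (hl : (1 <= l < L)%N)
  (t : nat) (ht : (0 < t)%N) (pi : 'I_(2 ^ L) -> R)
  (hreach : @reach R L p t pi)
  (lq mq : nat) (hq : @hiePM_choice R L pi lq mq) :
  @expected_next R L p l pi lq mq - @Unest R L l pi >= K_h p.
Proof.
have L1 : (1 <= L)%N by lia.
have hv := @reach_valid R L p t pi hp_range hp_mono L1 hreach.
have [pos tot] := hv.
have [hlq hmq s13 s23] := @struct R L pi lq mq L1 hv hq.
have [hq' qq] := @noise_bounds R L p lq hp_range hp_mono hlq.
have hl' : (1 <= l <= L)%N by lia.
rewrite (@drift R L p pi l lq mq hv hl' hq').
move: hq' qq; set q' := noise L p lq => /andP[q0' q1'] qq.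
set q := p (1 / 2).
have hqq : 0 < q < 1 / 2 by apply: hp_range; lra.
move: (hqq) => /andP[q0 q1].
set s := piH pi lq mq in s13 s23 *.
rewrite /K_h /= -/q.
have sums : forall m : 'I_(2 ^ l),
  [/\ 0 <= \sum_(i | inH l m i && inH lq mq i) pi i, 0 <= \sum_(i | inH l m i && ~~ inH lq mq i) pi i,
      0 <= \sum_(i | ~~ inH l m i && inH lq mq i) pi i, 0 <= \sum_(i | ~~ inH l m i && ~~ inH lq mq i) pi i &
      \sum_(i | inH l m i && inH lq mq i) pi i + \sum_(i | ~~ inH l m i && inH lq mq i) pi i = s].
  move=> m; split; try by apply: sum_ge0.
  rewrite /s /piH [RHS](bigID (fun i => inH l m i)) /=; congr (_ + _); apply: eq_bigl => i; exact: andbC.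
have facts := fun m : 'I_(2 ^ l) => @bin_facts R L pi l lq mq m hv hl'.
have lL : (l <= L)%N by lia.
have q1'' : q < 1 / 2 by [].
have [hA|hB] := leqP lq l.
- (* case A : the query is a union of level-l bins *)
  have s2 : s <= 2 / 3 by apply: s23; lia.
  set K1 := kl_bern (phi q 1) (phi q s).
  set K0 := kl_bern (phi q 0) (phi q s).
  apply: (@le_trans _ _ (\sum_(m < 2 ^ l) ((\sum_(i | inH l m i && inH lq mq i) pi i) * K1 +
                                           (\sum_(i | inH l m i && ~~ inH lq mq i) pi i) * K0))); last first.
    apply: ler_sum => m _.
    have [a0 b0 g0 d0 e] := sums m.
    have [x0 w0 t1] := facts m.
    rewrite /K1 /K0 -e /Tm.
    apply: binA => //.
    set bS := (m %/ 2 ^ (l - lq) == mq)%N.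
    have key : forall i : 'I_(2 ^ L), inH l m i -> inH lq mq i = bS.
      move=> i; rewrite !inH_div => /eqP hm.
      have lql : (lq <= l <= L)%N by rewrite hA lL.
      by rewrite (divpow L lq l i lql) hm.
    case hb: bS; [right|left]; apply: big_pred0 => i; apply/negbTE/negP => /andP[h1 h2].
      by move: h2; rewrite (key _ h1) hb.
    by move: h2; rewrite (key _ h1) hb.
  rewrite big_split /= -!mulr_suml.
  rewrite (partition_sum L l (fun i => inH lq mq i) pi lL).
  rewrite (partition_sum L l (fun i => ~~ inH lq mq i) pi lL).
  have hs1 : \sum_(i | ~~ inH lq mq i) pi i = 1 - s.
    have tot' := tot; rewrite (bigID (fun i => inH lq mq i)) /= in tot'.
    by move: tot'; rewrite /s /piH; lra.
  rewrite hs1 -/(piH pi lq mq) -/s.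
  rewrite ge_min; apply/orP; left.
  have h1 : 0 < phi q 1 < 1 by apply: phi_in => //; apply/andP; split; lra.
  have h0 : 0 < phi q 0 < 1 by apply: phi_in => //; apply/andP; split; lra.
  have hs : 0 <= s <= 1 by apply/andP; split; lra.
  have := conc_id h1 h0 hs.
  have -> : s * phi q 1 + (1 - s) * phi q 0 = phi q s by rewrite /phi; ring.
  rewrite -/K1 -/K0 => ->.
  have -> : phi q 1 = 1 - q by rewrite /phi; ring.
  have -> : phi q 0 = q by rewrite /phi; ring.
  rewrite binent_sym.
  have -> : mutinfo_bsc (1 / 3) q = binent (phi q (1 / 3)) - binent q by [].
  have ha : 0 < phi q (1 / 3) < 1 by apply: phi_in => //; apply/andP; split; lra.
  have hb : 0 < 1 - phi q (1 / 3) < 1 by move: ha => /andP[? ?]; apply/andP; split; lra.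
  have hlam : 0 <= 2 - 3 * s <= 1 by apply/andP; split; lra.
  have := binent_conc ha hb hlam.
  have -> : (2 - 3 * s) * phi q (1 / 3) + (1 - (2 - 3 * s)) * (1 - phi q (1 / 3)) = phi q s.
    by rewrite /phi; field.
  rewrite binent_sym.
  lra.
- (* case B : the query lies inside a single level-l bin *)
  have hk0 : (mq %/ 2 ^ (lq - l) < 2 ^ l)%N.
    rewrite ltn_divLR ?expn_gt0 // -expnD subnKC //; lia.
  set k0 : 'I_(2 ^ l) := Ordinal hk0.
  have key : forall i : 'I_(2 ^ L), inH lq mq i -> inH l k0 i.
    move=> i; rewrite !inH_div => /eqP hm.
    have llq : (l <= lq <= L)%N by rewrite (ltnW hB) /=; case/andP: hlq.
    by rewrite (divpow L l lq i llq) hm.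
  rewrite (bigD1 k0) //=.
  have rest : 0 <= \sum_(m < 2 ^ l | m != k0) Tm q'
     (\sum_(i | inH l m i && inH lq mq i) pi i) (\sum_(i | inH l m i && ~~ inH lq mq i) pi i)
     (\sum_(i | ~~ inH l m i && inH lq mq i) pi i) (\sum_(i | ~~ inH l m i && ~~ inH lq mq i) pi i).
    apply: sumr_ge0 => m _.
    have [a0 b0 g0 d0 e] := sums m.
    have [x0 w0 t1] := facts m.
    apply: binB1 => //; apply/andP; split => //.
  have ga0 : \sum_(i | ~~ inH l k0 i && inH lq mq i) pi i = 0.
    apply: big_pred0 => i; apply/negbTE/negP => /andP[h1 h2].
    by move: h1; rewrite key.
  have als : \sum_(i | inH l k0 i && inH lq mq i) pi i = s.
    rewrite /s /piH; apply: eq_bigl => i.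
    by apply/idP/idP => [/andP[_ ->] // | h]; rewrite h key.
  have [x0 w0 t1] := facts k0.
  have [a0 b0 g0 d0 e] := sums k0.
  move: rest x0 w0 t1 b0 d0; rewrite ga0 als.
  set be := \sum_(i | inH l k0 i && ~~ inH lq mq i) pi i.
  set de := \sum_(i | ~~ inH l k0 i && ~~ inH lq mq i) pi i.
  move=> rest x0 w0 t1 b0 d0.
  have s0 : 0 < s by lra.
  have de0 : 0 < de by lra.
  have t2 : s + be + de = 1 by lra.
  have hB0 := @binB0 R s be de q' q s0 b0 de0 t2 q0' qq q1.
  rewrite ge_min; apply/orP; right.
  have h13 : 0 < phi q (1 / 3) < 1 by apply: phi_in => //; apply/andP; split; lra.
  have hs' : 0 < phi q s < 1 by apply: phi_in => //; apply/andP; split; lra.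
  have h0 : 0 < phi q 0 < 1 by apply: phi_in => //; apply/andP; split; lra.
  have m1 : kl_bern (phi q (1 / 3)) (phi q 0) <= kl_bern (phi q s) (phi q 0).
    apply: kl_mono1 => //; left; apply/andP; split; apply: phi_mono => //; lra.
  have kpos := kl_ge0 h13 h0.
  have -> : 1 / 3 * (1 - q) + 2 / 3 * q = phi q (1 / 3) by rewrite /phi; field.
  have e0 : phi q 0 = q by rewrite /phi; ring.
  rewrite e0 in m1 kpos hB0.
  have hB0' : kl_bern (phi q s) q <= Tm q' s be 0 de := hB0.
  lra.
Qed.
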